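(* Every $\lambda^\star$-practical number is $\lambda$-practical.
   Context: $\lambda$ is the Carmichael function ($\lambda(n)$ is the least positive integer $m$ with $a^m\equiv1\pmod n$ for all $a$ coprime to $n$) and $\varphi$ is Euler's totient. A positive integer $n$ is $\lambda^\star$-practical if every positive integer $m\le\sum_{d\mid n}\lambda(d)$ can be written as $\sum_{d\in\mathcal{D}}\lambda(d)$ for some set $\mathcal{D}$ of distinct positive divisors of $n$. A positive integer $n$ is $\lambda$-practical if every integer $m$ with $1\le m\le n$ can be written as $m=\sum_{d\mid n}\lambda(d)m_d$ with integers $0\le m_d\le \varphi(d)/\lambda(d)$. *)

(* Defs.v *)
From mathcomp Require Import all_boot.
From mathcomp Require Import cyclic.
Set Implicit Arguments. Unset Strict Implicit. Unset Printing Implicit Defensive.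

(* Condition "a^m = 1 (mod n) for all a coprime to n", checked on the
   residues a < n (the condition only depends on a mod n). *)
Definition carm_pred (n : nat) : pred nat := fun m =>
  (0 < m) && [forall a : 'I_n, coprime a n ==> (a ^ m == 1 %[mod n])].

Lemma carm_exists n : exists m, carm_pred n m.
Proof.
case: n => [|n].
  by exists 1; apply/andP; split => //; apply/forallP => -[].
exists (totient n.+1); apply/andP; split; first by rewrite totient_gt0.
apply/forallP => a; apply/implyP => Ha; apply/eqP; exact: Euler_exp_totient.
Qed.

Definition carmichael (n : nat) : nat := ex_minn (carm_exists n).

Definition lambda_star_practical (n : nat) : Prop :=
  0 < n /\
  forall m, 1 <= m <= \sum_(d <- divisors n) carmichael d ->
    exists D : seq nat, [/\ uniq D, {subset D <= divisors n} &
      m = \sum_(d <- D) carmichael d].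

Definition lambda_practical (n : nat) : Prop :=
  0 < n /\
  forall m, 1 <= m <= n ->
    exists md : nat -> nat,
      (forall d, d \in divisors n -> md d <= totient d %/ carmichael d) /\
      m = \sum_(d <- divisors n) carmichael d * md d.

(* Main.v *)
Require Import Defs.
From mathcomp Require Import all_boot.
From mathcomp Require Import cyclic.

Lemma carm_spec n : carm_pred n (carmichael n) /\
  (forall m, carm_pred n m -> carmichael n <= m).
Proof. rewrite /carmichael; case: ex_minnP => l Hl Hmin; by split. Qed.

Lemma carm_gt0 n : 0 < carmichael n.
Proof. by case: (carm_spec n) => /andP[]. Qed.

Lemma carm_tot n : 0 < n -> carm_pred n (totient n).
Proof.
case: n => [//|n] _.
apply/andP; split; first by rewrite totient_gt0.
apply/forallP => a; apply/implyP => Ha; apply/eqP; exact: Euler_exp_totient.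
Qed.

Lemma carm_dvd n m : carm_pred n m -> carmichael n %| m.
Proof.
move=> Hm; case: (carm_spec n) => Hl Hmin.
set l := carmichael n in Hl Hmin *.
have l0 : 0 < l by case/andP: Hl.
rewrite /dvdn; apply/negPn/negP => Hr.
have : l <= m %% l.
  apply: Hmin; apply/andP; split; first by rewrite lt0n.
  apply/forallP => a; apply/implyP => Ha.
  move/andP: Hm => [_ /forallP /(_ a) /implyP /(_ Ha) /eqP Hm].
  move/andP: Hl => [_ /forallP /(_ a) /implyP /(_ Ha) /eqP Hl].
  apply/eqP; rewrite -Hm.
  have -> : a ^ m = (a ^ l) ^ (m %/ l) * a ^ (m %% l).
    by rewrite -expnM -expnD mulnC -divn_eq.
  rewrite -modnMml -[(a ^ l) ^ _ %% n]modnXm Hl modnXm exp1n modnMml mul1n.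
  done.
by rewrite leqNgt ltn_pmod.
Qed.

Section Main.
Variable ds : seq nat.
Hypothesis ds_uniq : uniq ds.
Variable lam : nat -> nat.

Definition P (c : nat -> nat) := forall m, m <= \sum_(d <- ds) lam d * c d ->
  exists md : nat -> nat, (forall d, d \in ds -> md d <= c d) /\
     m = \sum_(d <- ds) lam d * md d.

Lemma P_ext c c' : {in ds, c =1 c'} -> P c -> P c'.
Proof.
move=> E Pc m Hm.
have Es : \sum_(d <- ds) lam d * c d = \sum_(d <- ds) lam d * c' d.
  by rewrite big_seq_cond [RHS]big_seq_cond; apply: eq_bigr => d /andP[/E ->].
case: (Pc m); first by rewrite Es.
move=> md [H1 H2]; exists md; split => // d dd; by rewrite -E // H1.
Qed.

Lemma sum_incr (f : nat -> nat) d0 : d0 \in ds ->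
  \sum_(d <- ds) lam d * (f d + (d == d0)) = \sum_(d <- ds) lam d * f d + lam d0.
Proof.
move=> Hd0.
rewrite (bigD1_seq d0) //= (bigD1_seq d0 Hd0) //= eqxx.
rewrite (@eq_bigr _ _ _ _ _ _ (fun d => lam d * (f d + (d == d0))) (fun d => lam d * f d)).
  by rewrite mulnDr muln1 addnAC.
by move=> d /negbTE ->; rewrite addn0.
Qed.

Lemma P_incr c d0 : d0 \in ds -> lam d0 <= (\sum_(d <- ds) lam d * c d).+1 ->
  P c -> P (fun d => c d + (d == d0)).
Proof.
move=> Hd0 Hl Pc m; rewrite sum_incr // => Hm.
case: (leqP m (\sum_(d <- ds) lam d * c d)) => Hm2.
  case: (Pc m Hm2) => md [H1 H2]; exists md; split => // d dd.
  by rewrite (leq_trans (H1 d dd)) ?leq_addr.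
case: (Pc (m - lam d0)); first by rewrite leq_subLR addnC.
move=> md [H1 H2]; exists (fun d => md d + (d == d0)); split.
  by move=> d dd; rewrite leq_add2r H1.
rewrite sum_incr // -H2 subnK //.
exact: leq_trans Hl Hm2.
Qed.
End Main.

Theorem corollary5p6 (n : nat) :
  lambda_star_practical n -> lambda_practical n.
Proof.
move=> [n0 Hstar]; split => //.
set ds := divisors n.
have ds_uniq : uniq ds := divisors_uniq n.
set lam := carmichael.
set k := fun d => totient d %/ carmichael d.
have dpos : forall d, d \in ds -> 0 < d.
  by move=> d; rewrite -dvdn_divisors // => /dvdn_gt0; apply.
have lamk : forall d, d \in ds -> lam d * k d = totient d.
  move=> d /dpos d0; rewrite /lam /k mulnC divnK //; exact/carm_dvd/carm_tot.
have k1 : forall d, d \in ds -> 0 < k d.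
  move=> d dd; have := lamk d dd; case: (k d) => //; rewrite muln0 => /esym.
  by move=> H; have := totient_gt0 d; rewrite H (dpos d dd).
have Pbase : P ds lam (fun _ => 1).
  move=> m; rewrite (eq_bigr (fun d => lam d)); last by move=> d _; rewrite muln1.
  move=> Hm.
  case: m Hm => [|m] Hm.
    by exists (fun _ => 0); split => //; rewrite big1 // => d _; rewrite muln0.
  case: (Hstar m.+1); first by rewrite Hm.
  move=> D [UD SD ->]; exists (fun d => d \in D : nat); split.
    by move=> d _; case: (d \in D).
  have pe : perm_eq D [seq d <- ds | d \in D].
    apply: uniq_perm => //; first by rewrite filter_uniq.
    by move=> d; rewrite mem_filter; case E: (d \in D) => //=; rewrite SD.
  rewrite (perm_big _ pe) big_filter big_mkcond /=.
  by apply: eq_bigr => d _; case: (d \in D); rewrite ?muln1 ?muln0.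
have Pall : forall N c, \sum_(d <- ds) c d <= N ->
    (forall d, d \in ds -> 0 < c d <= k d) -> P ds lam c.
  elim=> [|N IH] c HN Hc.
    move: HN; rewrite (bigD1_seq 1) ?divisor1 //=.
    by case/andP: (Hc 1 (divisor1 n)); case: (c 1).
  case: (boolP (has (fun d => 1 < c d) ds)) => [/hasP[d0 dd0 cd0]|].
    pose c' := fun d => c d - (d == d0).
    have Ec : {in ds, (fun d => c' d + (d == d0)) =1 c}.
      move=> d _; rewrite /c'; case: eqP => [->|]; rewrite ?subn0 ?addn0 //.
      by rewrite subnK // ltnW.
    have Pc' : P ds lam c'.
      apply: IH.
        have E1 : \sum_(d <- ds) (d == d0 : nat) = 1.
          rewrite (bigD1_seq d0) //= eqxx big1_seq ?addn0 //.
          by move=> d /andP[/negbTE ->].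
        by move: HN; rewrite -(eq_big_seq _ Ec) big_split /= E1 addn1 ltnS.
      move=> d dd; rewrite /c'; move: (Hc d dd) => /andP[H1 H2].
      case: eqP => [Hd|_]; last by rewrite subn0 H1.
      subst d; rewrite subn_gt0 cd0 /=; exact: leq_trans (leq_subr _ _) H2.
    apply: P_ext Ec _.
    apply: P_incr => //.
    rewrite (bigD1_seq d0) //=.
    apply: leq_trans (leqnSn _); apply: leq_trans (leq_addr _ _).
    by rewrite /c' eqxx leq_pmulr // subn_gt0.
  rewrite -all_predC => /allP Hall.
  apply: P_ext Pbase => d dd; move: (Hall d dd) (Hc d dd) => /=.
  by rewrite -leqNgt => H /andP[H0 _]; apply/eqP; rewrite eqn_leq H0 H.
have Pk : P ds lam k.
  apply: (Pall _ _ (leqnn _)) => d dd; by rewrite (k1 d dd) leqnn.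
move=> m /andP[_ Hm].
case: (Pk m).
  rewrite (eq_big_seq _ lamk).
  suff -> : \sum_(d <- ds) totient d = n by [].
  rewrite -{1}(sum_totient_dvd n) -(big_mkord (fun d => d %| n)) -[RHS]big_filter.
  apply: perm_big; apply: uniq_perm => //; first by rewrite filter_uniq ?iota_uniq.
  move=> d; rewrite mem_filter mem_iota /= -dvdn_divisors //.
  case H: (d %| n) => //=; by rewrite ltnS dvdn_leq.
by move=> md [H1 H2]; exists md; split.
Qed.
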